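(* Let $G$ and $H$ be finite simple graphs with $\delta(G)\le\delta(H)$. Let $S$ be a minimum edge-cut in $G\times H$ and let $B,W$ be the connected components of $(G\times H)-S$. If for every $(x,y)\in V(G\times H)$ either $N_G(x)\times\{y\}\subseteq B$ or $N_G(x)\times\{y\}\subseteq W$, then $S$ is of type 2, 4, 6 or 8.
   Context: The direct product $G\times H$ has vertex set $V(G)\times V(H)$, with $(x_1,y_1)$ adjacent to $(x_2,y_2)$ if and only if $x_1x_2\in E(G)$ and $y_1y_2\in E(H)$. $\delta(F)$ is the minimum degree of $F$ and $N_G(x)$ the open neighbourhood of $x$ in $G$. For a minimum edge-cut $S$ of $G\times H$, $B$ (black) and $W$ (white) are the two connected components of $(G\times H)-S$. The types are the following shapes of $(B,W)$ (up to interchanging $B$ and $W$), all partitions being disjoint unions: Type 2: $B=V(G)\times B'$, $W=V(G)\times W'$ with $V(H)=B'\cup W'$. Type 4: $V(G)=X_1\cup X_2$, $V(H)=Y_1\cup Y_2$, $B=(X_1\times Y_1)\cup(X_2\times Y_2)$, $W=(X_1\times Y_2)\cup(X_2\times Y_1)$. Type 6: $V(G)=X\cup Y$, $V(H)=C_1\cup C_2\cup C_3$, $B=(X\times C_1)\cup(Y\times C_2)$, $W=(X\times C_2)\cup(Y\times C_1)\cup(V(G)\times C_3)$. Type 8: $V(G)=X\cup Y$, $V(H)=C_1\cup C_2\cup C_3\cup C_4$, $B=(X\times C_1)\cup(Y\times C_2)\cup(V(G)\times C_4)$, $W=(X\times C_2)\cup(Y\times C_1)\cup(V(G)\times C_3)$.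 (In the paper these types are given by a figure: in types 6 and 8 each $G$-layer $V(G)\times\{y\}$ is either monochromatic or split along a fixed partition $X\cup Y$ of $V(G)$.) *)

(* Defs.v *)
From mathcomp Require Import all_boot.
Set Implicit Arguments.
Unset Strict Implicit.
Unset Printing Implicit Defensive.

Section Graphs.
Variable T : finType.

Definition simple_graph (e : rel T) : Prop := symmetric e /\ irreflexive e.

Definition nbhd (e : rel T) (x : T) : {set T} := [set y | e x y].

(* minimum degree delta (equals the true minimum whenever T is nonempty) *)
Definition mindeg (e : rel T) : nat := \big[minn/#|T|]_(x : T) #|nbhd e x|.

Definition edge_set (e : rel T) : {set {set T}} :=
  [set [set u.1; u.2] | u in [set u : T * T | e u.1 u.2]].

Definition remove_edges (e : rel T) (S : {set {set T}}) : rel T :=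
  fun x y => e x y && ([set x; y] \notin S).

Definition connected_rel (e : rel T) : Prop := forall x y, connect e x y.

Definition edge_cut (e : rel T) (S : {set {set T}}) : Prop :=
  S \subset edge_set e /\ ~ connected_rel (remove_edges e S).

Definition min_edge_cut (e : rel T) (S : {set {set T}}) : Prop :=
  edge_cut e S /\ forall S', edge_cut e S' -> #|S| <= #|S'|.

Definition component (e : rel T) (C : {set T}) : Prop :=
  exists x, C = [set y | connect e x y].

Definition is_partition (s : seq {set T}) : Prop :=
  pairwise (fun A B : {set T} => [disjoint A & B]) s /\ \bigcup_(A <- s) A = [set: T].

End Graphs.

(* direct (tensor) product G x H *)
Definition prod_rel (T1 T2 : finType) (e1 : rel T1) (e2 : rel T2) : rel (T1 * T2) :=
  fun u v => e1 u.1 v.1 && e2 u.2 v.2.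

Section Types.
Variables (VG VH : finType).
Implicit Types B W : {set VG * VH}.

Definition type2 B W : Prop :=
  exists B' W' : {set VH}, is_partition [:: B'; W'] /\
    B = setX [set: VG] B' /\ W = setX [set: VG] W'.

Definition type4 B W : Prop :=
  exists (X1 X2 : {set VG}) (Y1 Y2 : {set VH}),
    is_partition [:: X1; X2] /\ is_partition [:: Y1; Y2] /\
    B = setX X1 Y1 :|: setX X2 Y2 /\ W = setX X1 Y2 :|: setX X2 Y1.

Definition type6 B W : Prop :=
  exists (X Y : {set VG}) (C1 C2 C3 : {set VH}),
    is_partition [:: X; Y] /\ is_partition [:: C1; C2; C3] /\
    B = setX X C1 :|: setX Y C2 /\
    W = setX X C2 :|: setX Y C1 :|: setX [set: VG] C3.

Definition type8 B W : Prop :=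
  exists (X Y : {set VG}) (C1 C2 C3 C4 : {set VH}),
    is_partition [:: X; Y] /\ is_partition [:: C1; C2; C3; C4] /\
    B = setX X C1 :|: setX Y C2 :|: setX [set: VG] C4 /\
    W = setX X C2 :|: setX Y C1 :|: setX [set: VG] C3.

Definition type_2468 B W : Prop := type2 B W \/ type4 B W \/ type6 B W \/ type8 B W.

End Types.

(* Main.v *)
Require Import Defs.
From mathcomp Require Import all_boot.

Set Implicit Arguments.
Unset Strict Implicit.
Unset Printing Implicit Defensive.

Lemma proj_connect (VG VH : finType) (eG : rel VG) (eH : rel VH) S (u v : VG * VH) :
  connect (remove_edges (prod_rel eG eH) S) u v -> connect eG u.1 v.1.
Proof.
move/connectP=> [p pth ->]; elim: p u pth => [|w p IH] u /=; first by rewrite connect0.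
rewrite {1}/remove_edges /prod_rel => /andP[/andP[/andP[h1 _] _] hp].
exact: connect_trans (connect1 h1) (IH _ hp).
Qed.

Definition e2 (T : finType) (e : rel T) : rel T := fun x z => [exists m, e x m && e m z].

Lemma walk_parity (T : finType) (e : rel T) (a x : T) : connect e a x ->
  connect (e2 e) a x \/ exists n, e a n /\ connect (e2 e) n x.
Proof.
move/connectP=> [p]; elim: p a => [|w p IH] a /=.
  by move=> _ ->; left; exact: connect0.
move=> /andP[eaw pth] lst; case: (IH w pth lst) => [h|[n [ewn h]]].
  by right; exists w.
left; apply: connect_trans h; apply: connect1; apply/existsP; exists w.
by rewrite eaw ewn.
Qed.

Lemma nb_same (VG VH : finType) (eG : rel VG) (B : {set VG * VH})
  (hN : forall x y, setX (nbhd eG x) [set y] \subset B \/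
                   setX (nbhd eG x) [set y] \subset ~: B) m u w y :
  eG m u -> eG m w -> ((u, y) \in B) = ((w, y) \in B).
Proof.
move=> hu hw.
have hu' : (u, y) \in setX (nbhd eG m) [set y] by rewrite in_setX /nbhd !inE hu /=.
have hw' : (w, y) \in setX (nbhd eG m) [set y] by rewrite in_setX /nbhd !inE hw /=.
case: (hN m y) => /subsetP h; first by rewrite (h _ hu') (h _ hw').
by move: (h _ hu') (h _ hw'); rewrite !inE => /negbTE-> /negbTE->.
Qed.

Lemma e2_color (VG VH : finType) (eG : rel VG) (B : {set VG * VH})
  (sG : symmetric eG)
  (hN : forall x y, setX (nbhd eG x) [set y] \subset B \/
                   setX (nbhd eG x) [set y] \subset ~: B) u v y :
  connect (e2 eG) u v -> ((u, y) \in B) = ((v, y) \in B).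
Proof.
move/connectP=> [p]; elim: p u => [|w p IH] u /=; first by move=> _ ->.
move=> /andP[/existsP[m /andP[hum hmw]] pth] lst; rewrite -(IH w pth lst).
by apply: (nb_same hN (m := m)); rewrite // sG.
Qed.

Theorem corollary2p8 (VG VH : finType) (eG : rel VG) (eH : rel VH)
  (hG : simple_graph eG) (hH : simple_graph eH)
  (hdeg : mindeg eG <= mindeg eH)
  (S : {set {set VG * VH}}) (hS : min_edge_cut (prod_rel eG eH) S)
  (B W : {set VG * VH})
  (hB : component (remove_edges (prod_rel eG eH) S) B)
  (hW : component (remove_edges (prod_rel eG eH) S) W)
  (hBW : B != W) (hcov : B :|: W = [set: VG * VH])
  (hN : forall (x : VG) (y : VH),
      setX (nbhd eG x) [set y] \subset B \/ setX (nbhd eG x) [set y] \subset W) :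
  type_2468 B W \/ type_2468 W B.
Proof.
case: hG => sG iG; case: hH => sH iH.
set r := remove_edges (prod_rel eG eH) S.
have sr : symmetric r.
  move=> u v; rewrite /r /remove_edges /prod_rel sG sH.
  by congr (_ && _); rewrite setUC.
have [b0 hB'] := hB; have [w0 hW'] := hW.
have hWB : W = ~: B.
  apply/setP => z; rewrite inE; have : z \in B :|: W by rewrite hcov inE.
  rewrite inE.
  case zB: (z \in B) => //= _; apply/negP => zW; apply: (negP hBW); apply/eqP.
  rewrite hB' inE in zB; rewrite hW' inE in zW.
  rewrite hB' hW'; apply/setP => v; rewrite !inE; apply/idP/idP => h.
    apply: connect_trans h; apply: connect_trans zW _.
    by rewrite (sym_connect_sym sr).
  apply: connect_trans h; apply: connect_trans zB _.
  by rewrite (sym_connect_sym sr).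
rewrite hWB in hN *; left.
case: (boolP [forall x, connect eG b0.1 x]) => hc; last first.
  move/forallPn: hc => [x' hx'].
  set C := [set x | connect eG b0.1 x].
  have hBC : B = setX C setT.
    apply/setP => [[x y]]; rewrite in_setX in_setT andbT inE.
    apply/idP/idP => h.
      by rewrite hB' inE in h; exact: (proj_connect h).
    apply/negPn/negP => nB.
    have xW : (x, y) \in W by rewrite hWB inE.
    have x'W : (x', y) \in W.
      rewrite hWB inE; apply/negP; rewrite hB' inE => /proj_connect /= hh.
      by rewrite hh in hx'.
    rewrite hW' inE in xW; rewrite hW' inE in x'W.
    move/proj_connect: xW; move/proj_connect: x'W => /= h1 h2.
    apply: (negP hx'); apply: connect_trans h (connect_trans _ h1).
    by rewrite (sym_connect_sym sG).
  right; left; exists C, (~: C), setT, set0.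
  split; [|split; [|split]].
  - split; first by rewrite /=; repeat (apply/andP; split) => //; apply/pred0P => z /=; rewrite !inE ?andbN ?orbN.
    by apply/setP => z; rewrite !big_cons big_nil !inE ?orbF ?orbN.
  - split; first by rewrite /=; repeat (apply/andP; split) => //; apply/pred0P => z /=; rewrite !inE.
    by apply/setP => z; rewrite !big_cons big_nil !inE.
  - by rewrite hBC; apply/setP => [[x y]]; rewrite !inE /= ?andbT ?andbF ?orbF ?orbT //; case: (connect _ _ _).
  - by rewrite hBC; apply/setP => [[x y]]; rewrite !inE /= ?andbT ?andbF ?orbF ?orbT //; case: (connect _ _ _).
set xb := b0.1.
set X := [set x | connect (e2 eG) xb x].
pose pX y := (xb, y) \in B.
pose pY y := [exists x in ~: X, (x, y) \in B].
have hcol : forall x y, ((x, y) \in B) = if x \in X then pX y else pY y.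
  move=> x y; case xX: (x \in X).
    by rewrite inE in xX; rewrite /pX (e2_color sG hN y xX).
  apply/idP/idP => h.
    by apply/existsP; exists x; rewrite inE xX h.
  move/existsP: h => [x' /andP[x'Y hx']].
  rewrite inE in x'Y.
  have hp : forall z, z \notin X -> exists n, eG xb n /\ connect (e2 eG) n z.
    move=> z zX; case: (walk_parity ((forallP hc) z)) => // h.
    by rewrite inE h in zX.
  have [n [hn1 hn2]] := hp x (negbT xX).
  have [n' [hn1' hn2']] := hp x' x'Y.
  rewrite -(e2_color sG hN y hn2) -(e2_color sG hN y hn2') in hx' *.
  by rewrite (nb_same hN y hn1 hn1').
right; right; right.
exists X, (~: X), [set y | pX y && ~~ pY y], [set y | ~~ pX y && pY y],
  [set y | ~~ pX y && ~~ pY y], [set y | pX y && pY y].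
split; [|split; [|split]].
- split; first by rewrite /=; repeat (apply/andP; split) => //; apply/pred0P => z /=; rewrite !inE ?andbN ?orbN.
  by apply/setP => z; rewrite !big_cons big_nil !inE ?orbF ?orbN.
- split.
    by rewrite /=; repeat (apply/andP; split) => //;
       apply/pred0P => z /=; rewrite !inE; case: (pX z); case: (pY z).
  by apply/setP => z; rewrite !big_cons big_nil !inE; case: (pX z); case: (pY z).
- apply/setP => [[x y]]; rewrite hcol !inE /=.
  by case: (connect _ _ _); case: (pX y); case: (pY y).
- apply/setP => [[x y]]; rewrite inE hcol !inE /=.
  by case: (connect _ _ _); case: (pX y); case: (pY y).
Qed.
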